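(* There exist two pairwise non-isomorphic Steiner systems $S(2,7,589)$. In particular, a Steiner system $S(2,7,589)$ exists.
   Context: For integers $2\le t<k<v$, a Steiner system $S(t,k,v)$ is a pair $(V,\mathcal B)$ where $V$ is a set with $|V|=v$ and $\mathcal B$ is a family of $k$-element subsets of $V$ (blocks) such that every $t$-element subset of $V$ is contained in exactly one block. Two Steiner systems $(V,\mathcal B)$ and $(V',\mathcal B')$ are isomorphic if there is a bijection $V\to V'$ mapping $\mathcal B$ onto $\mathcal B'$. *)

(* Defs.v *)
From mathcomp Require Import all_boot.
Set Implicit Arguments. Unset Strict Implicit. Unset Printing Implicit Defensive.

(* A Steiner system S(t,k,v) on the point set 'I_v (any v-element set is in
   bijection with 'I_v): a family of blocks, each a k-subset, such that every
   t-subset is contained in exactly one block. *)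
Definition steiner_system (t k v : nat) (B : {set {set 'I_v}}) : Prop :=
  (forall b, b \in B -> #|b| = k) /\
  (forall T : {set 'I_v}, #|T| = t ->
     #|[set b in B | T \subset b]| = 1).

Definition steiner_iso (v : nat) (B1 B2 : {set {set 'I_v}}) : Prop :=
  exists f : 'I_v -> 'I_v, bijective f /\ [set f @: (b : {set 'I_v}) | b in B1] = B2.
Arguments steiner_system : clear implicits.

(* Main.v *)
From mathcomp Require Import all_boot all_order all_algebra ring.
Require Import Defs.
Set Implicit Arguments. Unset Strict Implicit. Unset Printing Implicit Defensive.
Import Order.TTheory GRing.Theory.

Definition pt (n : nat) : 'I_589 := inZp n.

Lemma val_pt n : val (pt n) = n %% 589. Proof. by []. Qed.
Lemma pt_val (x : 'I_589) : pt (val x) = x.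
Proof. by apply: val_inj; rewrite val_pt modn_small ?ltn_ord. Qed.
Lemma val_add (x y : 'I_589) : val (x + y)%R = (val x + val y) %% 589.
Proof. by []. Qed.

Definition Dl (D : seq (seq nat)) (i : nat) : seq nat := nth [::] D i.
Definition Dset D i : {set 'I_589} := [set x in map pt (Dl D i)].
Definition blk D i (t : 'I_589) : {set 'I_589} := [set (x + t)%R | x in Dset D i].
Definition Bdes D : {set {set 'I_589}} := [set blk D p.1 p.2 | p : 'I_14 * 'I_589].

Lemma blk_memE D i t x : (x \in blk D i t) = ((x - t)%R \in map pt (Dl D i)).
Proof.
apply/imsetP/idP => [[y]|H].
  by rewrite inE => Hy ->; rewrite addrK.
by exists (x - t)%R; rewrite ?inE // subrK.
Qed.

Lemma blk_in_B D i t : i < 14 -> blk D i t \in Bdes D.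
Proof. by move=> Hi; apply/imsetP; exists (Ordinal Hi, t). Qed.

Definition tripi D i : seq (nat * 'I_589 * 'I_589) :=
  [seq q <- [seq (i, pt u, pt w) | u <- Dl D i, w <- Dl D i] | q.1.2 != q.2].
Definition trip D := flatten [seq tripi D i | i <- iota 0 14].
Definition dif (q : nat * 'I_589 * 'I_589) : 'I_589 := (q.1.2 - q.2)%R.
Definition dcheck D :=
  [&& sort leq (map (fun q => val (dif q)) (trip D)) == iota 1 588,
      all (fun i => (size (Dl D i) == 7) && uniq (map pt (Dl D i))) (iota 0 14) &
      all (all (gtn 589)) D].

Lemma trip_memP D q :
  reflect (exists i u w, [/\ i < 14, u \in Dl D i, w \in Dl D i, pt u != pt w
                            & q = (i, pt u, pt w)]) (q \in trip D).
Proof.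
apply: (iffP flatten_mapP) => [[i Hi]|[i [u [w [Hi Hu Hw Huw ->]]]]].
  rewrite mem_filter => /andP [Hneq /allpairsP [[u w] [/= Hu Hw Eq]]].
  exists i, u, w; split => //; first by move: Hi; rewrite mem_iota.
  by move: Hneq; rewrite Eq.
exists i; first by rewrite mem_iota.
rewrite mem_filter /= Huw /=; apply/allpairsP; exists (u, w); split => //.
Qed.

Lemma uniq_map_inj (T1 T2 : eqType) (f : T1 -> T2) s x y :
  uniq (map f s) -> x \in s -> y \in s -> f x = f y -> x = y.
Proof.
elim: s => //= z s IH /andP [Hz Hu]; rewrite !inE.
case/orP => [/eqP->|Hx]; case/orP => [/eqP->|Hy] E //.
- by move: Hz; rewrite E map_f.
- by move: Hz; rewrite -E map_f.
- exact: IH.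
Qed.

Lemma Dset_mem D i x : (x \in Dset D i) = (x \in map pt (Dl D i)).
Proof. by rewrite inE. Qed.

Lemma dcheck_uniq D : dcheck D -> uniq (map dif (trip D)).
Proof.
case/and3P => /eqP H _ _.
have : uniq (map (fun q => val (dif q)) (trip D)) by rewrite -(sort_uniq leq) H iota_uniq.
by rewrite (map_comp val dif); exact: map_uniq.
Qed.

Lemma dcheck_cover D (d : 'I_589) : dcheck D -> d != 0%R -> d \in map dif (trip D).
Proof.
case/and3P => /eqP H _ _ dnz.
have Hd : val d \in iota 1 588.
  rewrite mem_iota /= ltn_ord andbT lt0n; apply: contra dnz => /eqP e.
  by apply/eqP/val_inj.
move: Hd; rewrite -H mem_sort => /mapP [q Hq /val_inj ->].
exact: map_f.
Qed.

Lemma DF_uniq D i j x y x' y' : dcheck D -> i < 14 -> j < 14 ->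
  x \in Dset D i -> y \in Dset D i -> x' \in Dset D j -> y' \in Dset D j ->
  x != y -> (x - y)%R = (x' - y')%R -> [/\ i = j, x = x' & y = y'].
Proof.
move=> dc Hi Hj; have Hu := dcheck_uniq dc.
rewrite !Dset_mem => /mapP [u Hu' ->] /mapP [w Hw' ->] /mapP [u' Hu'' ->] /mapP [w' Hw'' ->] uw E.
have H1 : (i, pt u, pt w) \in trip D by apply/trip_memP; exists i, u, w.
have uw' : pt u' != pt w'.
  by apply/eqP => e; move: uw; rewrite -subr_eq0 E e subrr eqxx.
have H2 : (j, pt u', pt w') \in trip D by apply/trip_memP; exists j, u', w'.
have e := uniq_map_inj Hu H1 H2 E.
split; [exact: (congr1 (fun q => q.1.1) e) | exact: (congr1 (fun q => q.1.2) e) | exact: (congr1 (fun q => q.2) e)].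
Qed.

Lemma DF_ex D (d : 'I_589) : dcheck D -> d != 0%R -> exists i x y,
  [/\ i < 14, x \in Dset D i, y \in Dset D i & (x - y)%R = d].
Proof.
move=> dc dnz.
move: (dcheck_cover dc dnz) => /mapP [q /trip_memP [i [u [w [Hi Hu Hw _ ->]]]] ->].
by exists i, (pt u), (pt w); rewrite !Dset_mem !map_f.
Qed.

Lemma card_Dset D i : dcheck D -> i < 14 -> #|Dset D i| = 7.
Proof.
case/and3P => _ /allP H _ Hi.
have /andP [/eqP Hs Hu] : (size (Dl D i) == 7) && uniq (map pt (Dl D i)).
  by apply: H; rewrite mem_iota.
by rewrite cardsE (card_uniqP Hu) size_map Hs.
Qed.

Lemma card_blk D i t : dcheck D -> i < 14 -> #|blk D i t| = 7.
Proof. by move=> dc Hi; rewrite card_imset ?card_Dset //; exact: addIr. Qed.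

Lemma steinerD D : dcheck D -> steiner_system 2 7 589 (Bdes D).
Proof.
move=> dc; split.
  by move=> b /imsetP [[i t] _ ->]; exact: card_blk (ltn_ord i).
move=> T /eqP /cards2P [x [y [xy ->]]].
have dnz : (x - y)%R != 0%R by rewrite subr_eq0.
have [i [u [w [Hi Hu Hw E]]]] := DF_ex dc dnz.
have uw : u != w by apply: contraNneq dnz => uw; rewrite -E uw subrr.
apply/eqP/cards1P; exists (blk D i (x - u)%R).
apply/setP => b; rewrite !inE.
apply/andP/eqP => [[/imsetP [[j s] _ ->] /subsetP Hs]| ->].
  have Hx : x \in blk D j s by apply: Hs; rewrite !inE eqxx.
  have Hy : y \in blk D j s by apply: Hs; rewrite !inE eqxx orbT.
  rewrite blk_memE -Dset_mem in Hx; rewrite blk_memE -Dset_mem in Hy.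
  have E2 : (u - w)%R = ((x - s) - (y - s))%R by rewrite E; ring.
  have [ij ux _] := DF_uniq dc Hi (ltn_ord j) Hu Hw Hx Hy uw E2.
  rewrite /= -ij ux; congr blk; ring.
split; first exact: blk_in_B.
apply/subsetP => z; rewrite !inE => /orP [] /eqP ->; rewrite blk_memE -Dset_mem.
  by have -> : (x - (x - u))%R = u by ring.
have -> : (y - (x - u))%R = (u - (x - y))%R by ring.
by rewrite -E; have -> : (u - (u - w))%R = w by ring.
Qed.

Definition meets (A B : {set 'I_589}) := A :&: B != set0.
Definition lines_at (B : {set {set 'I_589}}) p M M' :=
  [set L in B | [&& p \in L, meets L M & meets L M']].
Definition Pat (B : {set {set 'I_589}}) p := exists M M',
  [/\ M \in B, M' \in B, M != M', p \notin M & p \notin M'] /\ 6 <= #|lines_at B p M M'|.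

Lemma meetsP (A B : {set 'I_589}) : reflect (exists z, z \in A /\ z \in B) (meets A B).
Proof.
rewrite /meets; apply: (iffP (set0Pn _)) => [[z]|[z [zA zB]]]; first by rewrite inE => /andP [? ?]; exists z.
by exists z; rewrite inE zA zB.
Qed.

Lemma transport (B1 B2 : {set {set 'I_589}}) (f : 'I_589 -> 'I_589) (p : 'I_589) : bijective f ->
  [set f @: (b : {set 'I_589}) | b in B1] = B2 -> Pat B1 p -> Pat B2 (f p).
Proof.
move=> bf <- [M [M' [[HM HM' MM' pM pM'] H6]]].
have fi : injective f := bij_inj bf.
have Fi : injective (fun b : {set 'I_589} => f @: b) := imset_inj fi.
exists (f @: M), (f @: M'); split; first split.
- exact: imset_f.
- exact: imset_f.
- by rewrite (inj_eq Fi).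
- by rewrite mem_imset.
- by rewrite mem_imset.
apply: leq_trans H6 _.
rewrite -(card_imset _ Fi); apply: subset_leq_card; apply/subsetP => L' /imsetP [L HL ->].
move: HL; rewrite !inE => /and4P [HL pL /meetsP [z [zL zM]] /meetsP [z' [zL' zM']]].
rewrite imset_f //= mem_imset // pL /=.
apply/andP; split; apply/meetsP.
  by exists (f z); rewrite !mem_imset.
by exists (f z'); rewrite !mem_imset.
Qed.

Lemma blk_shift (D : seq (seq nat)) i (t s : 'I_589) : [set (x + s)%R | x in blk D i t] = blk D i (t + s)%R.
Proof.
rewrite /blk -imset_comp; apply: eq_imset => x /=; by rewrite addrA.
Qed.

Lemma transl_img (D : seq (seq nat)) (s : 'I_589) :
  [set (fun x => (x + s)%R) @: (b : {set 'I_589}) | b in Bdes D] = Bdes D.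
Proof.
apply/setP => b; apply/imsetP/imsetP.
  by move=> [b0 /imsetP [[i t] _ ->] ->]; exists (i, (t + s)%R) => //; rewrite blk_shift.
move=> [[i t] _ ->]; exists (blk D i (t - s)%R); first exact: blk_in_B.
by rewrite blk_shift subrK.
Qed.

Lemma Pat_shift (D : seq (seq nat)) (p : 'I_589) : Pat (Bdes D) p -> Pat (Bdes D) 0%R.
Proof.
move=> H.
have bf : bijective (fun x : 'I_589 => (x + - p)%R).
  by exists (fun x => (x + p)%R) => x /=; rewrite ?addrNK ?addrK.
have := transport bf (transl_img D (- p)%R) H.
by rewrite subrr.
Qed.

Definition pairsD (D : seq (seq nat)) : seq (nat * nat) :=
  flatten [seq [seq (i, u) | u <- Dl D i] | i <- iota 0 14].
Definition lineOf D (k : nat) : {set 'I_589} :=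
  blk D (nth (0,0) (pairsD D) k).1 (- pt (nth (0,0) (pairsD D) k).2)%R.
Definition lid (lt : seq nat) (x : 'I_589) : nat := nth 0 lt x.
Definition lcheck D lt :=
  [&& all (fun n => let k := nth 0 lt n in let q := nth (0,0) (pairsD D) k in
          [&& k < 98, q.1 < 14, q.2 \in Dl D q.1 &
              has (fun w => (pt w - pt q.2)%R == pt n) (Dl D q.1)]) (iota 1 588),
      uniq (pairsD D) & size (pairsD D) == 98].

Lemma lineOf_in D lt x : lcheck D lt -> x != 0%R ->
  [/\ lid lt x < 98, lineOf D (lid lt x) \in Bdes D,
      0%R \in lineOf D (lid lt x) & x \in lineOf D (lid lt x)].
Proof.
case/and3P => /allP H _ _ x0.
have Hx : val x \in iota 1 588.
  rewrite mem_iota /= ltn_ord andbT lt0n; apply: contra x0 => /eqP e.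
  by apply/eqP/val_inj.
case/and4P: (H _ Hx) => Hk Hq1 Hq2 /hasP [w Hw /eqP Ew].
rewrite /lineOf /lid.
set q := nth (0,0) (pairsD D) (nth 0 lt x) in Hk Hq1 Hq2 Hw Ew *.
have Ex : (pt w - pt q.2)%R = x by rewrite Ew pt_val.
split => //.
- exact: blk_in_B.
- by rewrite blk_memE sub0r opprK map_f.
- rewrite blk_memE opprK.
  have -> : (x + pt q.2)%R = pt w by rewrite -Ex subrK.
  exact: map_f.
Qed.

Lemma lineOf_uniqline D lt L x : dcheck D -> lcheck D lt -> L \in Bdes D ->
  0%R \in L -> x \in L -> x != 0%R -> L = lineOf D (lid lt x).
Proof.
move=> dc lc HL L0 xL x0.
have [_ Hl l0 lx] := lineOf_in lc x0.
have := (steinerD dc).2 [set 0%R; x].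
rewrite cards2 eq_sym x0 => /(_ erefl) /eqP /cards1P [a Ea].
have sub : forall b, b \in Bdes D -> 0%R \in b -> x \in b -> b = a.
  move=> b Hb b0 bx; apply/set1P; rewrite -Ea inE Hb /=.
  by apply/subsetP => z; rewrite !inE => /orP [] /eqP ->.
by rewrite (sub _ HL L0 xL) (sub _ Hl l0 lx).
Qed.

Lemma Dl_bound D i u : all (all (gtn 589)) D -> u \in Dl D i -> u < 589.
Proof.
move=> /allP H; rewrite /Dl.
case: (ltnP i (size D)) => Hi; last by rewrite nth_default.
by move=> Hu; have /allP := H _ (mem_nth [::] Hi); apply.
Qed.

Lemma blk_inj D i j t s : dcheck D -> i < 14 -> j < 14 ->
  blk D i t = blk D j s -> i = j /\ t = s.
Proof.
move=> dc Hi Hj E.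
have dc' := dc; case/and3P: dc' => _ /allP H _.
have /andP [/eqP Hs Hu] : (size (Dl D i) == 7) && uniq (map pt (Dl D i)).
  by apply: H; rewrite mem_iota.
pose u0 := nth (pt 0) (map pt (Dl D i)) 0; pose w0 := nth (pt 0) (map pt (Dl D i)) 1.
have Hu0 : u0 \in Dset D i by rewrite Dset_mem mem_nth // size_map Hs.
have Hw0 : w0 \in Dset D i by rewrite Dset_mem mem_nth // size_map Hs.
have uw : u0 != w0 by rewrite /u0 /w0 nth_uniq // size_map Hs.
have Hu1 : (u0 + t - s)%R \in Dset D j.
  by rewrite Dset_mem -blk_memE -E; apply: imset_f.
have Hw1 : (w0 + t - s)%R \in Dset D j.
  by rewrite Dset_mem -blk_memE -E; apply: imset_f.
have E2 : (u0 - w0)%R = ((u0 + t - s) - (w0 + t - s))%R by ring.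
have [ij e1 _] := DF_uniq dc Hi Hj Hu0 Hw0 Hu1 Hw1 uw E2.
split => //.
have := congr1 (fun z => z - u0 + s)%R e1.
have -> : (u0 - u0 + s = s)%R by ring.
by have -> : (u0 + t - s - u0 + s = t)%R by ring.
Qed.

Lemma pairsD_mem D q : q \in pairsD D -> q.1 < 14 /\ q.2 \in Dl D q.1.
Proof.
by case/flatten_mapP => i; rewrite mem_iota => /andP [_ Hi] /mapP [u Hu ->].
Qed.

Lemma lineOf_inj D lt k k' : dcheck D -> lcheck D lt -> k < 98 -> k' < 98 ->
  lineOf D k = lineOf D k' -> k = k'.
Proof.
move=> dc lc Hk Hk' E.
have dc' := dc; case/and3P: dc' => _ _ Hb.
case/and3P: lc => _ Hu /eqP Hs.
have Hq : nth (0,0) (pairsD D) k \in pairsD D by rewrite mem_nth // Hs.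
have Hq' : nth (0,0) (pairsD D) k' \in pairsD D by rewrite mem_nth // Hs.
case: (pairsD_mem Hq) => Hq1 Hq2; case: (pairsD_mem Hq') => Hq1' Hq2'.
case: (blk_inj dc Hq1 Hq1' E) => e1 /oppr_inj /(congr1 val).
rewrite !val_pt !modn_small ?(Dl_bound Hb Hq2) ?(Dl_bound Hb Hq2') // => e2.
apply/eqP; rewrite -(nth_uniq (0,0) _ _ Hu) ?Hs //.
by move: e1 e2; case: (nth _ _ k) => a b; case: (nth _ _ k') => a' b' /= -> ->.
Qed.

Definition addm (x y : nat) := (x + y) %% 589.
Definition blkl D j t := [seq addm u t | u <- Dl D j].
Definition sigl D (lt : seq nat) j t := sort leq [seq nth 0 lt x | x <- blkl D j t].
Definition keysl D lt j t : seq (seqlexi nat) := [seq rem k (sigl D lt j t) | k <- sigl D lt j t].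
Definition idx D := [seq p <- [seq (j, t) | j <- iota 0 14, t <- iota 0 589] | 0 \notin blkl D p.1 p.2].
Definition allkeys D lt := flatten [seq keysl D lt p.1 p.2 | p <- idx D].
Definition sortcheck (s : seq (seqlexi nat)) := sorted <%O (sort <=%O s).
Lemma sortcheck_uniq s : sortcheck s -> uniq s.
Proof. by rewrite /sortcheck => H; rewrite -(sort_uniq <=%O); exact: lt_sorted_uniq H. Qed.


Definition SM D lt j t : {set 'I_98} := [set inord (lid lt x) | x in blk D j t].

Lemma SM_seq D lt j (t : 'I_589) : SM D lt j t = [set z in map inord (sigl D lt j t)].
Proof.
apply/setP => z; rewrite inE; apply/imsetP/mapP.
  move=> [x]; rewrite blk_memE => /mapP [u Hu Eu] ->.
  have Ex : val x = addm u t.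
    by rewrite /addm -[x](subrK t) Eu val_add val_pt modnDml.
  exists (nth 0 lt (addm u t)); last by rewrite /lid Ex.
  by rewrite /sigl mem_sort; apply: map_f; apply: map_f.
move=> [k]; rewrite /sigl mem_sort => /mapP [y /mapP [u Hu ->] ->] ->.
exists (pt u + t)%R; first by rewrite blk_memE addrK map_f.
by rewrite /lid val_add val_pt modnDml.
Qed.

Lemma flatten_disj (T U : eqType) (F : T -> seq U) (s : seq T) p p' a :
  uniq s -> uniq (flatten (map F s)) -> p \in s -> p' \in s ->
  a \in F p -> a \in F p' -> p = p'.
Proof.
elim: s => //= z s IH /andP [zs us]; rewrite cat_uniq => /and3P [_ Hd Hu].
rewrite !inE => /orP [/eqP->|Hp] /orP [/eqP->|Hp'] // Ha Ha'.
- by move: Hd; have -> // : has (mem (F z)) (flatten [seq F i | i <- s]);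
     apply/hasP; exists a => //; apply/flatten_mapP; exists p'.
- by move: Hd; have -> // : has (mem (F z)) (flatten [seq F i | i <- s]);
     apply/hasP; exists a => //; apply/flatten_mapP; exists p.
- exact: IH.
Qed.

Lemma key_of (A S : {set 'I_98}) s : uniq s -> all (gtn 98) s ->
  A = [set z in map inord s] -> #|A| = 7 -> S \subset A -> #|S| = 6 ->
  exists2 k, k \in s & forall n, (n \in rem k s) = (n < 98) && (inord n \in S).
Proof.
move=> us /allP bs EA cA SA cS.
have /cards1P [a Ea] : #|A :\: S| == 1 by rewrite cardsDS // cA cS.
have aA : a \in A by have := set11 a; rewrite -Ea inE => /andP [_ ->].
have aS : a \notin S by have := set11 a; rewrite -Ea inE => /andP [].
move: aA; rewrite EA inE => /mapP [k Hk Ea'].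
have k98 : k < 98 := bs _ Hk.
exists k => // n; rewrite mem_rem_uniq // inE.
case Hn: (n \in s); rewrite ?andbT ?andbF.
  have n98 : n < 98 := bs _ Hn; rewrite n98 /=.
  have nA : inord n \in A by rewrite EA inE map_f.
  apply/idP/idP => [nk|nS].
    apply/negPn/negP => nS.
    have : inord n \in A :\: S by rewrite inE nS nA.
    rewrite Ea inE Ea' => /eqP /(congr1 (@nat_of_ord _)); rewrite !inordK // => enk.
    by move: nk; rewrite enk eqxx.
  by apply/eqP => enk; move: aS; rewrite Ea' -enk nS.
case n98: (n < 98) => //=; apply/esym/negbTE/negP => nS.
have : inord n \in A := subsetP SA _ nS.
rewrite EA inE => /mapP [m Hm /(congr1 (@nat_of_ord _))].
have m98 : m < 98 := bs _ Hm.
rewrite !inordK // => enm.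
by move: Hn; rewrite enm Hm.
Qed.

Lemma sorted_sigl D lt j t : uniq (sigl D lt j t) -> sorted ltn (sigl D lt j t).
Proof. by move=> u; rewrite ltn_sorted_uniq_leq u sort_sorted //; exact: leq_total. Qed.

Lemma blkl0 D (jj : nat) (tt : 'I_589) : 0 \in blkl D jj tt -> (0%R : 'I_589) \in blk D jj tt.
Proof.
move=> /mapP [u Hu E0]; rewrite blk_memE.
have Hz : (pt u + tt = 0)%R.
  by apply: val_inj; rewrite val_add val_pt modnDml; exact: (esym E0).
have -> : (0 - tt)%R = pt u by rewrite -Hz addrK.
exact: map_f.
Qed.

Lemma idx_mem D (jj : 'I_14) (tt : 'I_589) :
    (0%R : 'I_589) \notin blk D jj tt -> (val jj, val tt) \in idx D.
Proof.
move=> H0; rewrite mem_filter; apply/andP; split.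
  apply: contra H0; exact: blkl0.
apply/allpairsP; exists (val jj, val tt); split.
- by rewrite mem_iota ltn_ord.
- by rewrite mem_iota ltn_ord.
- by [].
Qed.

Lemma allkeysE (D : seq (seq nat)) (lt : seq nat) :
  allkeys D lt = flatten [seq keysl D lt p.1 p.2 | p <- idx D].
Proof. by rewrite /allkeys. Qed.

Lemma kcheck_uniq (D : seq (seq nat)) (lt : seq nat) : sortcheck (allkeys D lt) -> uniq (allkeys D lt).
Proof. exact: sortcheck_uniq. Qed.

Lemma kcheck_sig D lt p :
  all (fun p => uniq (sigl D lt p.1 p.2) && all (gtn 98) (sigl D lt p.1 p.2)) (idx D) -> p \in idx D ->
  uniq (sigl D lt p.1 p.2) && all (gtn 98) (sigl D lt p.1 p.2).
Proof. by move=> /allP H; apply: H. Qed.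

Lemma idx_uniq D : uniq (idx D).
Proof.
apply: filter_uniq; apply: allpairs_uniq; rewrite ?iota_uniq //.
by move=> [a b] [c d] _ _.
Qed.

Lemma cardSM D lt (jj : 'I_14) (tt : 'I_589) : dcheck D ->
  uniq (sigl D lt jj tt) -> all (gtn 98) (sigl D lt jj tt) -> #|SM D lt jj tt| = 7.
Proof.
case/and3P => _ /allP Hsz _ u b.
rewrite SM_seq cardsE (card_uniqP _).
  rewrite size_map size_sort !size_map.
  have /andP [/eqP -> _] : (size (Dl D jj) == 7) && uniq (map pt (Dl D jj)).
    by apply: Hsz; rewrite mem_iota ltn_ord.
  by [].
rewrite map_inj_in_uniq // => a c Ha Hc /(congr1 (@nat_of_ord _)).
have a98 : a < 98 := allP b _ Ha.
have c98 : c < 98 := allP b _ Hc.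
by rewrite !inordK.
Qed.

Lemma noPat0 D lt : dcheck D -> lcheck D lt ->
  all (fun p => uniq (sigl D lt p.1 p.2) && all (gtn 98) (sigl D lt p.1 p.2)) (idx D) ->
  sortcheck (allkeys D lt) -> ~ Pat (Bdes D) 0%R.
Proof.
move=> dc lc kc kc' [M [M' [[HM HM' MM' pM pM'] H6]]].
case/imsetP: HM => [[j t] _ EM]; case/imsetP: HM' => [[j' t'] _ EM'].
rewrite /= in EM EM'.
have step1 : #|lines_at (Bdes D) 0%R M M'| <= #|SM D lt j t :&: SM D lt j' t'|.
  apply: leq_trans (leq_imset_card (fun k : 'I_98 => lineOf D k) _).
  apply: subset_leq_card; apply/subsetP => L; rewrite inE.
  case/and4P => HL L0 /meetsP [x [xL xM]] /meetsP [y [yL yM']].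
  have x0 : x != 0%R by apply: contraNneq pM => <-.
  have y0 : y != 0%R by apply: contraNneq pM' => <-.
  have Lx := lineOf_uniqline dc lc HL L0 xL x0.
  have Ly := lineOf_uniqline dc lc HL L0 yL y0.
  have [kx _ _ _] := lineOf_in lc x0.
  have [ky _ _ _] := lineOf_in lc y0.
  have exy : lid lt x = lid lt y by apply: (lineOf_inj dc lc kx ky); rewrite -Lx -Ly.
  apply/imsetP; exists (inord (lid lt x)); last by rewrite /= inordK.
  rewrite inE; apply/andP; split; apply/imsetP.
    by exists x; rewrite -?EM.
  by exists y; rewrite -?EM' // exy.
have uK := kcheck_uniq kc'.
have uI := idx_uniq D.
have I1 : (val j, val t) \in idx D by apply: idx_mem; rewrite -EM.
have I2 : (val j', val t') \in idx D by apply: idx_mem; rewrite -EM'.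
have /andP [us bs] := kcheck_sig kc I1.
have /andP [us' bs'] := kcheck_sig kc I2.
have cA := cardSM dc us bs.
have cA' := cardSM dc us' bs'.
have H6' := leq_trans H6 step1.
pose I := SM D lt j t :&: SM D lt j' t'.
pose S := [set z in take 6 (enum I)].
have cS : #|S| = 6.
  rewrite cardsE (card_uniqP _); last exact: take_uniq (enum_uniq _).
  by rewrite size_takel // -cardE.
have SA : S \subset SM D lt j t.
  by apply/subsetP => z; rewrite inE => /mem_take; rewrite mem_enum => /setIP [].
have SA' : S \subset SM D lt j' t'.
  by apply/subsetP => z; rewrite inE => /mem_take; rewrite mem_enum => /setIP [].
have [k Hk Ek] := key_of us bs (SM_seq D lt j t) cA SA cS.
have [k' Hk' Ek'] := key_of us' bs' (SM_seq D lt j' t') cA' SA' cS.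
have Erem : rem k (sigl D lt j t) = rem k' (sigl D lt j' t').
  apply: (irr_sorted_eq ltn_trans ltnn).
  - by rewrite rem_filter //; apply: sorted_filter; [exact: ltn_trans | exact: sorted_sigl].
  - by rewrite rem_filter //; apply: sorted_filter; [exact: ltn_trans | exact: sorted_sigl].
  by move=> n; rewrite Ek Ek'.
pose F := fun p : nat * nat => keysl D lt p.1 p.2.
have a1 : (rem k (sigl D lt j t) : seqlexi nat) \in F (val j, val t).
  by rewrite /F /keysl; apply: (map_f (fun k0 => rem k0 (sigl D lt j t))).
have a2 : (rem k (sigl D lt j t) : seqlexi nat) \in F (val j', val t').
  by rewrite Erem /F /keysl; apply: (map_f (fun k0 => rem k0 (sigl D lt j' t'))).
rewrite allkeysE in uK.
have := flatten_disj (F := F) uI uK I1 I2 a1 a2.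
case=> /val_inj ej /val_inj et.
by move: MM'; rewrite EM EM' ej et eqxx.
Qed.

Definition meetsb D (q : nat * nat) j (t : 'I_589) :=
  has (fun z => ((z - (- pt q.2))%R \in map pt (Dl D q.1)) && ((z - t)%R \in map pt (Dl D j)))
      (map pt (iota 0 589)).

Lemma meetsb_meets D q j t : meetsb D q j t -> meets (blk D q.1 (- pt q.2)%R) (blk D j t).
Proof. by case/hasP => z _ /andP [h1 h2]; apply/meetsP; exists z; rewrite !blk_memE. Qed.

Lemma PatW D (ws : seq (nat * nat)) j1 t1 j2 t2 : dcheck D -> j1 < 14 -> j2 < 14 ->
  blk D j1 t1 != blk D j2 t2 -> (0%R : 'I_589) \notin blk D j1 t1 ->
  (0%R : 'I_589) \notin blk D j2 t2 ->
  all (fun q => [&& q.1 < 14, q.2 < 589, (0 - (- pt q.2))%R \in map pt (Dl D q.1),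
                    meetsb D q j1 t1 & meetsb D q j2 t2]) ws ->
  uniq ws -> size ws = 6 -> Pat (Bdes D) 0%R.
Proof.
move=> dc Hj1 Hj2 M12 p1 p2 /allP Hw uw sw.
exists (blk D j1 t1), (blk D j2 t2); split; first by split => //; exact: blk_in_B.
apply: (@leq_trans #|[set L in [seq blk D q.1 (- pt q.2)%R | q <- ws]]|).
  rewrite cardsE (card_uniqP _) ?size_map ?sw //.
  rewrite map_inj_in_uniq // => q q' Hq Hq' E.
  case/and5P: (Hw _ Hq) => a1 a2 _ _ _; case/and5P: (Hw _ Hq') => b1 b2 _ _ _.
  case: (blk_inj dc a1 b1 E) => e1 /oppr_inj /(congr1 val).
  rewrite !val_pt !modn_small // => e2.
  by move: e1 e2; case: q {Hq a1 a2 E} => a b; case: q' {Hq' b1 b2} => c d /= -> ->.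
apply: subset_leq_card; apply/subsetP => L; rewrite inE => /mapP [q Hq ->]; rewrite inE.
case/and5P: (Hw _ Hq) => a1 _ a3 m1 m2.
rewrite blk_in_B //= blk_memE a3 /=; apply/andP; split; exact: meetsb_meets.
Qed.

Definition Dno : seq (seq nat) := [:: [:: 186; 465; 403; 505; 239; 63; 557]; [:: 279; 403; 310; 349; 178; 180; 161]; [:: 124; 310; 465; 324; 172; 346; 460]; [:: 0; 9; 194; 386; 121; 514; 543]; [:: 0; 332; 23; 234; 406; 571; 201]; [:: 0; 11; 368; 210; 202; 493; 483]; [:: 0; 144; 159; 286; 449; 189; 540]; [:: 0; 51; 314; 224; 71; 287; 231]; [:: 0; 507; 523; 148; 394; 116; 79]; [:: 0; 1; 87; 501; 268; 345; 565]; [:: 0; 495; 68; 26; 135; 554; 489]; [:: 0; 58; 330; 334; 438; 197; 410]; [:: 0; 13; 338; 542; 545; 34; 295]; [:: 0; 12; 312; 455; 50; 122; 227]].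
Definition Dyes : seq (seq nat) := [:: [:: 248; 31; 527; 382; 21; 208; 474]; [:: 372; 341; 496; 250; 60; 426; 8]; [:: 558; 217; 155; 546; 508; 544; 107]; [:: 0; 5; 435; 149; 142; 574; 462]; [:: 0; 119; 340; 130; 199; 232; 158]; [:: 0; 37; 274; 278; 215; 446; 517]; [:: 0; 56; 160; 373; 405; 484; 289]; [:: 0; 51; 314; 224; 322; 331; 525]; [:: 0; 507; 523; 148; 360; 103; 126]; [:: 0; 97; 193; 299; 222; 466; 490]; [:: 0; 306; 117; 166; 336; 371; 471]; [:: 0; 55; 252; 73; 131; 461; 206]; [:: 0; 1; 26; 87; 495; 501; 68]; [:: 0; 13; 338; 542; 545; 34; 295]].
Definition lidno : seq nat := [:: 0; 63; 11; 87; 79; 20; 76; 52; 39; 21; 41; 35; 91; 84; 15; 43; 57; 13; 33; 13; 50; 85; 17; 28; 69; 69; 70; 54; 83; 26; 44; 7; 61; 34; 84; 75; 15; 62; 92; 9; 1; 33; 73; 90; 88; 43; 27; 87; 14; 48; 91; 49; 3; 0; 10; 27; 55; 88; 77; 71; 87; 75; 2; 52; 66; 76; 58; 72; 70; 62; 7; 49; 95; 25; 29; 26; 80; 67; 88; 56; 79; 87; 57; 55; 26; 97; 64; 63; 66; 66; 52; 46; 1; 9; 71; 6; 40; 47; 31; 12; 76; 11; 2; 75; 80; 96; 41; 40; 79; 73; 92; 69; 22; 60; 19; 37; 56; 41; 13; 19; 71; 21; 91; 5; 7; 37; 76; 44; 24; 60; 12; 34; 11; 82; 94; 70; 17; 82;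 18; 78; 46; 17; 43; 93; 42; 58; 94; 3; 56; 13; 15; 81; 18; 53; 2; 15; 68; 24; 38; 42; 53; 57; 71; 45; 4; 32; 39; 27; 76; 12; 75; 11; 31; 50; 18; 66; 5; 95; 30; 83; 50; 65; 58; 32; 94; 22; 14; 1; 13; 42; 96; 36; 23; 48; 21; 60; 26; 77; 57; 36; 14; 28; 35; 24; 86; 34; 32; 86; 48; 81; 35; 30; 24; 82; 58; 92; 53; 0; 6; 33; 68; 37; 14; 12; 49; 11; 4; 91; 97; 71; 57; 49; 37; 67; 28; 76; 50; 83; 48; 29; 27; 82; 13; 53; 68; 68; 59; 90; 16; 2; 90; 86; 33; 20; 45; 80; 94; 29; 65; 79; 47; 89; 95; 50; 86; 25; 4; 64; 63; 26; 3; 6; 78; 38; 60; 51; 78; 93; 61; 0; 29; 39; 85; 38; 46; 86; 42; 49; 18; 93; 44; 39; 69; 18; 90; 84; 16; 67; 40; 46; 92; 20; 54; 45; 89; 43; 40; 90; 41; 30; 1; 60; 91; 80; 49; 62; 41; 79; 4; 0; 23; 67; 67; 3; 24; 85; 51; 93; 90; 46; 77; 68; 28; 96; 77; 48; 14; 31; 84; 88; 5; 14; 87; 60; 64; 63; 51; 8; 81; 23; 33; 47; 78; 54; 74; 31; 66; 36; 55; 59; 74; 94; 97; 1; 8; 52; 8; 19; 35; 69; 34; 0; 2; 54; 97; 59; 83; 22; 31; 38; 78; 44; 88; 30; 32; 87; 21; 39; 34; 17; 38; 61; 82; 25; 56; 23; 43; 24; 39; 93; 47; 10; 5; 15; 23;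 95; 28; 61; 67; 55; 77; 34; 97; 4; 65; 19; 52; 32; 10; 74; 10; 72; 25; 37; 33; 2; 46; 72; 62; 55; 44; 37; 27; 66; 16; 6; 52; 17; 77; 20; 9; 59; 5; 92; 62; 43; 94; 45; 16; 42; 82; 15; 80; 20; 74; 91; 79; 9; 29; 9; 58; 26; 45; 73; 40; 8; 0; 96; 25; 73; 16; 7; 36; 61; 41; 20; 57; 25; 65; 96; 74; 81; 36; 35; 97; 81; 72; 3; 7; 70; 7; 29; 45; 35; 5; 70; 8; 6; 48; 51; 64; 63; 65; 65; 93; 22; 51; 56; 89; 83; 62; 89; 68; 83; 21; 32; 23; 96; 53; 10; 59; 72; 74; 56; 75; 69; 54; 1; 73; 85; 75; 78; 85; 54; 22; 8; 4; 6; 50; 95; 42; 18; 84; 21; 47; 84; 86; 72; 30; 3; 10; 95; 61; 19; 70; 89; 31; 59; 9; 47; 27; 81; 51; 73; 64; 63; 30; 19; 89; 53; 12; 28; 11; 58; 44; 17; 85; 92; 36; 40; 22; 38; 55; 71; 16; 80; 88; 12; 64].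
Definition wl : seq (nat * nat) := [:: (0,382); (0,21); (1,341); (11,0); (12,1); (12,495)].

Lemma dN : dcheck Dno. Proof. vm_compute; reflexivity. Qed.
Lemma dY : dcheck Dyes. Proof. vm_compute; reflexivity. Qed.
Lemma lN : lcheck Dno lidno. Proof. vm_compute; reflexivity. Qed.
Lemma k1N : all (fun p => uniq (sigl Dno lidno p.1 p.2) && all (gtn 98) (sigl Dno lidno p.1 p.2)) (idx Dno).
Proof. vm_compute; reflexivity. Qed.
Lemma k2N : sortcheck (allkeys Dno lidno). Proof. vm_compute; reflexivity. Qed.

Lemma PatY : Pat (Bdes Dyes) 0%R.
Proof.
apply: (@PatW Dyes wl 12 (pt 5) 12 (pt 119) dY).
- by [].
- by [].
- apply/eqP => E; have [_ E2] := blk_inj dY (isT : 12 < 14) (isT : 12 < 14) E.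
  move: E2 => /(congr1 (@nat_of_ord _)) E3; vm_compute in E3; discriminate.
- rewrite blk_memE; vm_compute; reflexivity.
- rewrite blk_memE; vm_compute; reflexivity.
- vm_compute; reflexivity.
- vm_compute; reflexivity.
- reflexivity.
Qed.

Lemma noPatN (p : 'I_589) : ~ Pat (Bdes Dno) p.
Proof. by move=> HP; apply: (noPat0 dN lN k1N k2N); exact: Pat_shift HP. Qed.

Theorem mainTheorem2 :
  exists B1 B2 : {set {set 'I_589}},
    steiner_system 2 7 589 B1 /\ steiner_system 2 7 589 B2 /\
    ~ steiner_iso B1 B2.
Proof.
exists (Bdes Dyes), (Bdes Dno).
split; first exact: steinerD dY.
split; first exact: steinerD dN.
move=> [f [bf H]].
exact: (noPatN (transport bf H PatY)).
Qed.
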